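(* $\mathcal{E}_v$ is ground complete for $\simeq$: for all closed monitors $m,n$, if $m\simeq n$ then $\mathcal{E}_v\vdash m=n$.
   Context: Monitors: terms $m,n ::= v \mid a.m \mid m+n \mid x$ over a nonempty action set $\mathit{Act}$ ($a\in\mathit{Act}$) and variables $x$, verdicts $v::=\mathit{end}\mid\mathit{yes}\mid\mathit{no}$; closed monitors contain no variables. Transitions $\xrightarrow{\alpha}$, $\alpha\in\mathit{Act}\cup\{\tau\}$ ($\tau\notin\mathit{Act}$): least relation with $a.m\xrightarrow{a}m$; $m\xrightarrow{\alpha}m'$ implies $m+n\xrightarrow{\alpha}m'$ and $n+m\xrightarrow{\alpha}m'$; $v\xrightarrow{\alpha}v$ for each verdict $v$. Weak transitions: $m\xRightarrow{\varepsilon}m'$ iff $m(\xrightarrow{\tau})^*m'$; $m\xRightarrow{a}m'$ iff $m\xRightarrow{\varepsilon}\xrightarrow{a}\xRightarrow{\varepsilon}m'$; $m\xRightarrow{as'}m'$ ($s'\neq\varepsilon$) iff $m\xRightarrow{a}m_1\xRightarrow{s'}m'$. For closed $m$: $L_a(m)=\{s\in\mathit{Act}^*\mid m\xRightarrow{s}\mathit{yes}\}$, $L_r(m)=\{s\in\mathit{Act}^*\mid m\xRightarrow{s}\mathit{no}\}$; $m\simeq n$ iff $L_a(m)=L_a(n)$ and $L_r(m)=L_r(n)$. $\mathcal{E}\vdash m=n$ denotes derivability by reflexivity, symmetry, transitivity, substitution and congruence for $a.\_$ and $+$. $\mathcal{E}_v$ consists of (A1) $x+y=y+x$; (A2) $x+(y+z)=(x+y)+z$;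 (A3) $x+x=x$; (A4) $x+\mathit{end}=x$; and, for each $a\in\mathit{Act}$, ($E_a$) $a.\mathit{end}=\mathit{end}$; ($Y_a$) $\mathit{yes}=\mathit{yes}+a.\mathit{yes}$; ($N_a$) $\mathit{no}=\mathit{no}+a.\mathit{no}$; ($D_a$) $a.(x+y)=a.x+a.y$. *)

(* Defs.v *)
From Stdlib Require Import List Relations.
Import ListNotations.
Set Implicit Arguments.

Inductive verdict : Type := vend | vyes | vno.

Inductive mon (Act : Type) : Type :=
| Verd : verdict -> mon Act
| Pre  : Act -> mon Act -> mon Act
| Sum  : mon Act -> mon Act -> mon Act
| Var  : nat -> mon Act.
Arguments Verd {Act} _.
Arguments Var {Act} _.

Fixpoint closed {Act : Type} (m : mon Act) : Prop :=
  match m with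
  | Verd _ => True
  | Pre _ m => closed m
  | Sum m n => closed m /\ closed n
  | Var _ => False
  end.

(* labels: Some a for a in Act, None for tau *)
Inductive step {Act : Type} : mon Act -> option Act -> mon Act -> Prop :=
| step_pre  : forall a m, step (Pre a m) (Some a) m
| step_suml : forall m n al m', step m al m' -> step (Sum m n) al m'
| step_sumr : forall m n al m', step m al m' -> step (Sum n m) al m'
| step_verd : forall v al, step (Verd v) al (Verd v).

Definition tau_star {Act : Type} : mon Act -> mon Act -> Prop :=
  clos_refl_trans (mon Act) (fun m m' => step m None m').

Definition weak1 {Act : Type} (m : mon Act) (a : Act) (m' : mon Act) : Prop :=
  exists m1 m2, tau_star m m1 /\ step m1 (Some a) m2 /\ tau_star m2 m'.

Fixpoint weak {Act : Type} (m : mon Act) (s : list Act) (m' : mon Act) : Prop :=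
  match s with
  | [] => tau_star m m'
  | a :: s' =>
      match s' with
      | [] => weak1 m a m'
      | _ :: _ => exists m1, weak1 m a m1 /\ weak m1 s' m'
      end
  end.

Definition L_a {Act : Type} (m : mon Act) (s : list Act) : Prop := weak m s (Verd vyes).
Definition L_r {Act : Type} (m : mon Act) (s : list Act) : Prop := weak m s (Verd vno).

Definition mon_equiv {Act : Type} (m n : mon Act) : Prop :=
  (forall s, L_a m s <-> L_a n s) /\ (forall s, L_r m s <-> L_r n s).

Fixpoint subst {Act : Type} (sg : nat -> mon Act) (m : mon Act) : mon Act :=
  match m with
  | Verd v => Verd v
  | Pre a m => Pre a (subst sg m)
  | Sum m n => Sum (subst sg m) (subst sg n)
  | Var x => sg x
  end.

(* The axiom system E_v, with x = Var 0, y = Var 1, z = Var 2 *)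
Inductive Ev {Act : Type} : mon Act -> mon Act -> Prop :=
| A1 : Ev (Sum (Var 0) (Var 1)) (Sum (Var 1) (Var 0))
| A2 : Ev (Sum (Var 0) (Sum (Var 1) (Var 2))) (Sum (Sum (Var 0) (Var 1)) (Var 2))
| A3 : Ev (Sum (Var 0) (Var 0)) (Var 0)
| A4 : Ev (Sum (Var 0) (Verd vend)) (Var 0)
| Ea : forall a, Ev (Pre a (Verd vend)) (Verd vend)
| Ya : forall a, Ev (Verd vyes) (Sum (Verd vyes) (Pre a (Verd vyes)))
| Na : forall a, Ev (Verd vno) (Sum (Verd vno) (Pre a (Verd vno)))
| Da : forall a, Ev (Pre a (Sum (Var 0) (Var 1))) (Sum (Pre a (Var 0)) (Pre a (Var 1))).

Inductive derivable {Act : Type} (E : mon Act -> mon Act -> Prop)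
  : mon Act -> mon Act -> Prop :=
| d_ax    : forall m n, E m n -> derivable E m n
| d_refl  : forall m, derivable E m m
| d_sym   : forall m n, derivable E m n -> derivable E n m
| d_trans : forall m n p, derivable E m n -> derivable E n p -> derivable E m p
| d_subst : forall sg m n, derivable E m n -> derivable E (subst sg m) (subst sg n)
| d_pre   : forall a m n, derivable E m n -> derivable E (Pre a m) (Pre a n)
| d_sum   : forall m m' n n', derivable E m m' -> derivable E n n' ->
              derivable E (Sum m n) (Sum m' n').

(* Main.v *)
Require Import Defs.
From Stdlib Require Import List Relations.
Import ListNotations.

Section S.
Context {Act : Type}.
Notation D := (@derivable Act Ev).
Implicit Types (m n k M : mon Act) (a : Act) (s t u : list Act) (v : verdict) (P Q : list (list Act * verdict)) (al : option Act).

Definition sg3 (x y z : mon Act) : nat -> mon Act :=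
  fun i => match i with 0 => x | 1 => y | _ => z end.

Lemma comm x y : D (Sum x y) (Sum y x).
Proof. exact (d_subst (sg3 x y y) (d_ax _ _ _ A1)). Qed.
Lemma assoc x y z : D (Sum x (Sum y z)) (Sum (Sum x y) z).
Proof. exact (d_subst (sg3 x y z) (d_ax _ _ _ A2)). Qed.
Lemma idem x : D (Sum x x) x.
Proof. exact (d_subst (sg3 x x x) (d_ax _ _ _ A3)). Qed.
Lemma endr x : D (Sum x (Verd vend)) x.
Proof. exact (d_subst (sg3 x x x) (d_ax _ _ _ A4)). Qed.
Lemma endl x : D (Sum (Verd vend) x) x.
Proof. eapply d_trans; [apply comm|apply endr]. Qed.
Lemma dist a x y : D (Pre a (Sum x y)) (Sum (Pre a x) (Pre a y)).
Proof. exact (d_subst (sg3 x y y) (d_ax _ _ _ (Da a))). Qed.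
Lemma preend a : D (Pre a (Verd vend)) (Verd vend).
Proof. apply d_ax; apply Ea. Qed.

Definition path (p : list Act * verdict) : mon Act :=
  fold_right (fun a r => Pre a r) (Verd (snd p)) (fst p).
Definition flat (P : list (list Act * verdict)) : mon Act :=
  fold_right (fun p r => Sum (path p) r) (Verd vend) P.

Fixpoint paths (m : mon Act) : list (list Act * verdict) :=
  match m with
  | Verd v => [([], v)]
  | Pre a m => map (fun p => (a :: fst p, snd p)) (paths m)
  | Sum m n => paths m ++ paths n
  | Var _ => []
  end.

Lemma path_end t : D (path (t, vend)) (Verd vend).
Proof.
  induction t as [|a t IH]; simpl. apply d_refl.
  eapply d_trans; [apply d_pre; exact IH| apply preend].
Qed.

Lemma absorb_base v u : v = vyes \/ v = vno ->
  D (Verd v) (Sum (Verd v) (path (u, v))).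
Proof.
  intros Hv. induction u as [|a u IH]; simpl.
  - apply d_sym, idem.
  - assert (Y : D (Verd v) (Sum (Verd v) (Pre a (Verd v)))).
    { destruct Hv; subst; apply d_ax; constructor. }
    eapply d_trans; [exact Y|].
    eapply d_trans; [apply d_sum; [apply d_refl| apply d_pre; exact IH]|].
    eapply d_trans; [apply d_sum; [apply d_refl| apply dist]|].
    eapply d_trans; [apply assoc|].
    apply d_sum; [apply d_sym; exact Y| apply d_refl].
Qed.

Lemma absorb t u v : v = vyes \/ v = vno ->
  D (path (t, v)) (Sum (path (t, v)) (path (t ++ u, v))).
Proof.
  intros Hv. induction t as [|a t IH]; simpl.
  - apply absorb_base; auto.
  - eapply d_trans; [apply d_pre; exact IH| apply dist].
Qed.

Lemma flat_app P Q : D (flat (P ++ Q)) (Sum (flat P) (flat Q)).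
Proof.
  induction P as [|x P IH]; simpl.
  - apply d_sym, endl.
  - eapply d_trans; [apply d_sum; [apply d_refl|exact IH]|apply assoc].
Qed.

Lemma L1 y P : In y P -> D (Sum (path y) (flat P)) (flat P).
Proof.
  induction P as [|z P IH]; simpl; intros H; [destruct H|].
  destruct H as [<-|H].
  - eapply d_trans; [apply assoc|]. apply d_sum; [apply idem|apply d_refl].
  - eapply d_trans; [apply assoc|].
    eapply d_trans; [apply d_sum; [apply comm|apply d_refl]|].
    eapply d_trans; [apply d_sym, assoc|].
    apply d_sum; [apply d_refl|auto].
Qed.

Definition covers (P Q : list (list Act * verdict)) : Prop :=
  forall x, In x Q -> snd x = vend \/
    exists y, In y P /\ snd y = snd x /\ (snd y = vyes \/ snd y = vno) /\
      exists u, fst x = fst y ++ u.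

Lemma L2 P Q : covers P Q -> D (Sum (flat Q) (flat P)) (flat P).
Proof.
  induction Q as [|x Q IH]; simpl; intros H.
  - apply endl.
  - eapply d_trans; [apply d_sym, assoc|].
    eapply d_trans; [apply d_sum; [apply d_refl| apply IH; intros z Hz; apply H; simpl; auto]|].
    destruct (H x (or_introl eq_refl)) as [He|[y [Hy [Hs [Hv [u Hu]]]]]].
    + destruct x as [t v]; simpl in He; subst.
      eapply d_trans; [apply d_sum; [apply path_end|apply d_refl]|apply endl].
    + eapply d_trans; [apply d_sum; [apply d_refl|apply d_sym, (L1 y P Hy)]|].
      eapply d_trans; [apply assoc|].
      eapply d_trans; [apply d_sum; [apply comm|apply d_refl]|].
      eapply d_trans; [|apply (L1 y P Hy)].
      apply d_sum; [|apply d_refl].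
      destruct x as [t v], y as [t' v']; simpl in *; subst.
      apply d_sym, absorb; auto.
Qed.

Lemma flat_eq P Q : covers P Q -> covers Q P -> D (flat P) (flat Q).
Proof.
  intros H1 H2.
  eapply d_trans; [apply d_sym, (L2 P Q H1)|].
  eapply d_trans; [apply comm| apply L2; auto].
Qed.

Lemma flat_pre a P :
  D (Pre a (flat P)) (flat (map (fun p => (a :: fst p, snd p)) P)).
Proof.
  induction P as [|x P IH]; simpl.
  - apply preend.
  - eapply d_trans; [apply dist|]. apply d_sum; [apply d_refl|exact IH].
Qed.

Lemma nf m : closed m -> D m (flat (paths m)).
Proof.
  induction m as [v|a m IH|m IHm n IHn|x]; simpl; intros Hc.
  - apply d_sym, endr.
  - eapply d_trans; [apply d_pre; auto| apply flat_pre].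
  - destruct Hc. eapply d_trans; [apply d_sum; eauto| apply d_sym, flat_app].
  - destruct Hc.
Qed.

Lemma step_tau_incl m al k : step m al k -> al = None -> incl (paths k) (paths m).
Proof.
  induction 1; simpl; intros He; try discriminate; intros z Hz; [apply in_or_app; left; apply IHstep| apply in_or_app; right; apply IHstep| ]; auto.

Qed.

Lemma tau_incl m k : tau_star m k -> incl (paths k) (paths m).
Proof.
  unfold tau_star. induction 1.
  - eapply step_tau_incl; eauto.
  - apply incl_refl.
  - eapply incl_tran; eauto.
Qed.

Lemma step_some m al k : step m al k -> forall a, al = Some a ->
  forall t v, In (t, v) (paths k) ->
  In (a :: t, v) (paths m) \/ (t = [] /\ In ([], v) (paths m)).
Proof.
  induction 1; simpl; intros b He t w Hin.
  - injection He as ->. left.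
    apply (in_map (fun p => (b :: fst p, snd p)) _ (t, w)); auto.
  - destruct (IHstep b He t w Hin) as [H1|[H1 H2]];
      [left|right; split]; auto; apply in_or_app; left; auto.
  - destruct (IHstep b He t w Hin) as [H1|[H1 H2]];
      [left|right; split]; auto; apply in_or_app; right; auto.
  - destruct Hin as [Hin|[]]. injection Hin as <- <-. right; auto.
Qed.

Lemma weak_cons m a s (m' : mon Act) :
  weak m (a :: s) m' <-> exists m1, weak1 m a m1 /\ weak m1 s m'.
Proof.
  destruct s as [|b s]; simpl.
  - split.
    + intros H; exists m'; split; [exact H|apply rt_refl].
    + intros [m1 [[k [k' [H1 [H2 H3]]]] H4]].
      exists k, k'; split; [exact H1|split; [exact H2|]].
      eapply rt_trans; eauto.
  - reflexivity.
Qed.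

Lemma weak_sound s : forall m v, weak m s (Verd v) ->
  exists t u, s = t ++ u /\ In (t, v) (paths m).
Proof.
  induction s as [|a s IH]; intros m v H.
  - simpl in H. exists [], []; split; auto.
    apply (tau_incl _ _ H). simpl; auto.
  - apply weak_cons in H. destruct H as [m1 [[k [k' [Hk [Hst Hk']]]] Hw]].
    destruct (IH m1 v Hw) as [t' [u' [Hs Hin]]].
    apply (tau_incl _ _ Hk') in Hin.
    destruct (step_some _ _ _ Hst a eq_refl t' v Hin) as [H1|[H1 H2]].
    + exists (a :: t'), u'; split; [simpl; congruence| apply (tau_incl _ _ Hk); auto].
    + exists [], (a :: s); split; auto. apply (tau_incl _ _ Hk); auto.
Qed.

Lemma verd_weak u v : weak (Verd v) u (Verd v).
Proof.
  induction u as [|a u IH].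
  - apply rt_refl.
  - apply weak_cons. exists (Verd v); split; auto.
    exists (Verd v), (Verd v); split; [apply rt_refl|split; [constructor|apply rt_refl]].
Qed.

Lemma lift_tau (m M x : mon Act) :
  (forall al k, step m al k -> step M al k) -> tau_star m x -> x = m \/ tau_star M x.
Proof.
  intros Hl H. unfold tau_star in *. apply clos_rt_rt1n in H.
  inversion H; subst.
  - left; auto.
  - right. eapply rt_trans; [apply rt_step; apply Hl; eauto| apply clos_rt1n_rt; auto].
Qed.

Lemma weak_lift (m M : mon Act) s v :
  (forall al k, step m al k -> step M al k) -> weak m s (Verd v) -> weak M s (Verd v).
Proof.
  intros Hl H. destruct s as [|a s].
  - simpl in *. destruct (lift_tau _ _ _ Hl H) as [He|H'].
    + subst. apply rt_step, Hl, step_verd.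
    + exact H'.
  - apply weak_cons in H; apply weak_cons.
    destruct H as [m1 [[k [k' [Hk [Hst Hk']]]] Hw]].
    exists m1; split; auto.
    destruct (lift_tau _ _ _ Hl Hk) as [He|H'].
    + subst. exists M, k'; split; [apply rt_refl|split; auto].
    + exists k, k'; auto.
Qed.

Lemma weak_complete m : forall t v, In (t, v) (paths m) -> forall u, weak m (t ++ u) (Verd v).
Proof.
  induction m as [w|a m IH|m IHm n IHn|x]; simpl; intros t v Hin u.
  - destruct Hin as [Hin|[]]. injection Hin as <- <-. apply verd_weak.
  - apply in_map_iff in Hin. destruct Hin as [[t' v'] [He Hin]].
    simpl in He. injection He as <- <-. simpl.
    apply weak_cons. exists m; split; [|apply IH; auto].
    exists (Pre a m), m; split; [apply rt_refl|split; [constructor|apply rt_refl]].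
  - apply in_app_or in Hin. destruct Hin as [Hin|Hin].
    + apply (weak_lift m); [intros; apply step_suml; auto| auto].
    + apply (weak_lift n); [intros; apply step_sumr; auto| auto].
  - destruct Hin.
Qed.

Lemma cov m n : mon_equiv m n -> covers (paths m) (paths n).
Proof.
  intros [Ha Hr] [s v] Hin. simpl.
  assert (Hw := weak_complete n s v Hin []). rewrite app_nil_r in Hw.
  destruct v.
  - left; auto.
  - right. apply Ha in Hw. destruct (weak_sound s m _ Hw) as [t [u [Hs Hin']]].
    exists (t, vyes); simpl; repeat split; eauto.
  - right. apply Hr in Hw. destruct (weak_sound s m _ Hw) as [t [u [Hs Hin']]].
    exists (t, vno); simpl; repeat split; eauto.
Qed.

End S.

Theorem mainTheorem7 (Act : Type) (a0 : Act) (m n : mon Act) :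
  closed m -> closed n -> mon_equiv m n -> derivable Ev m n.
Proof.
  intros Hm Hn He.
  eapply d_trans; [apply nf; exact Hm|].
  eapply d_trans; [|apply d_sym, nf; exact Hn].
  apply flat_eq; apply cov; auto.
  destruct He as [H1 H2]; split; intros s; [rewrite H1|rewrite H2]; reflexivity.
Qed.
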